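(* Let $G=(V,E,w)$ be a strongly connected directed weighted graph, let $S_1\subseteq S_2\subseteq V$, and let $0\le\delta_1\le\delta_2$. Then $\operatorname{fp}(G^{S_1},\delta_1)\le\operatorname{fp}(G^{S_2},\delta_2)$.
   Context: Positional Voter model. A graph $G=(V,E,w)$ has node set $V$ with $|V|=n$, edge set $E\subseteq V\times V$ and weights $w\colon E\to\mathbb{R}_{>0}$; $\operatorname{in}(u)=\{v\in V:(v,u)\in E\}$. A configuration is a set $X\subseteq V$ (the nodes carrying the novel trait $A$). Given a biased set $S\subseteq V$ and bias $\delta\ge 0$, define $f^S_X(v\mid u)=1+\delta$ if $v\in X$ and $u\in S$, and $1$ otherwise. The process $(\mathcal{X}_t)_{t\ge0}$: given $\mathcal{X}_t=X$, a node $u$ is chosen uniformly at random from $V$, then $v\in\operatorname{in}(u)$ is chosen with probability $\frac{f^S_X(v\mid u)\,w(v,u)}{\sum_{x\in\operatorname{in}(u)} f^S_X(x\mid u)\,w(x,u)}$, and $\mathcal{X}_{t+1}=X\cup\{u\}$ if $v\in X$, $\mathcal{X}_{t+1}=X\setminus\{u\}$ otherwise. Define $\operatorname{fp}(G^S,\delta,X)=\mathbb{P}[\exists t\ge0:\mathcal{X}_t=V\mid\mathcal{X}_0=X]$ and $\operatorname{fp}(G^S,\delta)=\frac1n\sum_{u\in V}\operatorname{fp}(G^S,\delta,\{u\})$. *)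

(* Defs.v *)
From HB Require Import structures.
From mathcomp Require Import all_boot all_order all_algebra.
From mathcomp Require Import all_classical all_reals topology normedtype sequences.
Set Implicit Arguments. Unset Strict Implicit. Unset Printing Implicit Defensive.
Import Order.TTheory GRing.Theory Num.Theory numFieldNormedType.Exports.
Local Open Scope ring_scope.

(* Graph G = (V, E, w): V is a finType, w : V -> V -> R with w v u >= 0 the
   weight of the edge (v,u); (v,u) \in E iff 0 < w v u. *)
Definition edge (R : realType) (V : finType) (w : V -> V -> R) : rel V :=
  fun v u => 0 < w v u.

Definition strongly_connected (R : realType) (V : finType) (w : V -> V -> R) :=
  forall x y : V, connect (edge w) x y.

Definition fitness (R : realType) (V : finType) (S : {set V}) (delta : R)
  (X : {set V}) (v u : V) : R :=
  if (v \in X) && (u \in S) then 1 + delta else 1.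

(* probability that u copies v, given configuration X (sums over in(u);
   non-edges have weight 0) *)
Definition copy_prob (R : realType) (V : finType) (w : V -> V -> R)
  (S : {set V}) (delta : R) (X : {set V}) (u v : V) : R :=
  fitness S delta X v u * w v u /
  (\sum_(x : V | 0 < w x u) fitness S delta X x u * w x u).

Definition update (V : finType) (X : {set V}) (u v : V) : {set V} :=
  if v \in X then u |: X else X :\ u.

(* hit w S delta t X = P[ exists s <= t, X_s = V | X_0 = X ] *)
Fixpoint hit (R : realType) (V : finType) (w : V -> V -> R)
  (S : {set V}) (delta : R) (t : nat) (X : {set V}) : R :=
  if X == [set: V] then 1 else
  match t with
  | 0 => 0
  | t'.+1 =>
      (#|V|%:R)^-1 *
      \sum_(u : V) \sum_(v : V | 0 < w v u)
          copy_prob w S delta X u v * hit w S delta t' (update X u v)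
  end.

(* fp(G^S, delta, X) = P[ exists t >= 0, X_t = V | X_0 = X ]
   = lim_t P[ exists s <= t, X_s = V ] (continuity from below). *)
Definition fp_from (R : realType) (V : finType) (w : V -> V -> R)
  (S : {set V}) (delta : R) (X : {set V}) : R :=
  limn (fun t => hit w S delta t X).

Definition fp (R : realType) (V : finType) (w : V -> V -> R)
  (S : {set V}) (delta : R) : R :=
  (#|V|%:R)^-1 * \sum_(u : V) fp_from w S delta [set u].

(* Main.v *)
Require Import Defs.
From HB Require Import structures.
From mathcomp Require Import all_boot all_order all_algebra.
From mathcomp Require Import all_classical all_reals topology normedtype sequences.
From mathcomp Require Import ring lra.
Import Order.TTheory GRing.Theory Num.Theory numFieldNormedType.Exports.
Local Open Scope ring_scope.

Section Aux.
Variables (R : realType) (V : finType) (w : V -> V -> R).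
Hypothesis w_ge0 : forall v u : V, 0 <= w v u.

Lemma scalar_ineq (k1 k2 a e T A B C D : R) :
  1 <= k1 -> k1 <= k2 -> 0 <= a -> a <= e -> e <= T ->
  A <= C -> B <= C -> B <= D ->
  (k1 * a * A + (T - a) * B) / (k1 * a + (T - a)) <=
  (k2 * e * C + (T - e) * D) / (k2 * e + (T - e)).
Proof.
move=> h1 h12 ha hae heT hAC hBC hBD.
have [T0|T0] := eqVneq T 0.
  subst T.
  have a0 : a = 0 by lra.
  have e0 : e = 0 by lra.
  by rewrite a0 e0 !(mulr0, subrr, mul0r, addr0, invr0).
have Tp : 0 < T by lra.
have s1p : 0 < k1 * a + (T - a) by nra.
have s2p : 0 < k2 * e + (T - e) by nra.
set s1 := k1 * a + (T - a); set s2 := k2 * e + (T - e).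
set p1 := k1 * a / s1; set p2 := k2 * e / s2.
have E1 : (k1 * a * A + (T - a) * B) / s1 = p1 * A + (1 - p1) * B.
  rewrite /p1 /s1; field; lra.
have E2 : (k2 * e * C + (T - e) * D) / s2 = p2 * C + (1 - p2) * D.
  rewrite /p2 /s2; field; lra.
rewrite E1 E2.
have p1ge : 0 <= p1 by rewrite /p1 divr_ge0 ?(ltW s1p) //; nra.
have p2le : p2 <= 1 by rewrite /p2 ler_pdivrMr // mul1r /s2; lra.
have p12 : p1 <= p2.
  rewrite /p1 /p2 ler_pdivrMr // mulrAC ler_pdivlMr //.
  rewrite /s1 /s2.
  have H1 : k1 * a <= k2 * e by nra.
  have H2 : k1 * a * (T - e) <= k2 * e * (T - a).
    apply: ler_pM; nra.
  nra.
have X1 : 0 <= p1 * (C - A) by apply: mulr_ge0; lra.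
have X2 : 0 <= (p2 - p1) * (C - B) by apply: mulr_ge0; lra.
have X3 : 0 <= (1 - p2) * (D - B) by apply: mulr_ge0; lra.
nra.
Qed.

Lemma sum_decomp (S : {set V}) (d : R) (Z : {set V}) (u : V) (h : {set V} -> R) :
  \sum_(v | 0 < w v u) copy_prob w S d Z u v * h (update Z u v) =
  ((if u \in S then 1 + d else 1) * (\sum_(v | (0 < w v u) && (v \in Z)) w v u)
     * h (u |: Z) +
   ((\sum_(v | 0 < w v u) w v u) - \sum_(v | (0 < w v u) && (v \in Z)) w v u)
     * h (Z :\ u)) /
  ((if u \in S then 1 + d else 1) * (\sum_(v | (0 < w v u) && (v \in Z)) w v u)
   + ((\sum_(v | 0 < w v u) w v u) - \sum_(v | (0 < w v u) && (v \in Z)) w v u)).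
Proof.
set k := (if u \in S then 1 + d else 1).
have Trest : (\sum_(v | 0 < w v u) w v u) - \sum_(v | (0 < w v u) && (v \in Z)) w v u
   = \sum_(v | (0 < w v u) && (v \notin Z)) w v u.
  by rewrite (bigID (fun x => x \in Z)) /= addrC addrK.
rewrite Trest.
have Den : \sum_(x | 0 < w x u) fitness S d Z x u * w x u =
   k * (\sum_(v | (0 < w v u) && (v \in Z)) w v u) +
   \sum_(v | (0 < w v u) && (v \notin Z)) w v u.
  rewrite (bigID (fun x => x \in Z)) /=; congr (_ + _).
    by rewrite mulr_sumr; apply: eq_bigr => v /andP[_ vZ]; rewrite /fitness vZ.
  by apply: eq_bigr => v /andP[_ vZ]; rewrite /fitness (negbTE vZ) mul1r.
rewrite /copy_prob Den.
under eq_bigr do rewrite mulrAC.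
rewrite -mulr_suml; congr (_ / _).
rewrite (bigID (fun x => x \in Z)) /=; congr (_ + _).
  rewrite mulr_sumr mulr_suml; apply: eq_bigr => v /andP[_ vZ].
  by rewrite /fitness /update vZ.
rewrite mulr_suml; apply: eq_bigr => v /andP[_ vZ].
by rewrite /fitness /update (negbTE vZ) mul1r.
Qed.


Lemma hit_0 S d X : hit w S d 0 X = if X == [set: V] then 1 else 0.
Proof. by []. Qed.

Lemma hit_S S d t X : hit w S d t.+1 X =
  if X == [set: V] then 1 else
      (#|V|%:R)^-1 *
      \sum_(u : V) \sum_(v : V | 0 < w v u)
          copy_prob w S d X u v * hit w S d t (update X u v).
Proof. by []. Qed.

Lemma cp_ge0 S d (hd : 0 <= d) Z u v : 0 <= copy_prob w S d Z u v.
Proof.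
have fge : forall x, 0 <= fitness S d Z x u.
  by move=> x; rewrite /fitness; case: ifP => _; lra.
rewrite /copy_prob divr_ge0 ?mulr_ge0 //.
by apply: sumr_ge0 => x _; rewrite mulr_ge0.
Qed.

Lemma cp_sum_le1 S d Z u : \sum_(v | 0 < w v u) copy_prob w S d Z u v <= 1.
Proof.
rewrite /copy_prob -mulr_suml.
set D := \sum_(x | _) _.
have [->|D0] := eqVneq D 0; first by rewrite invr0 mulr0 ler01.
by rewrite mulfV.
Qed.

Lemma hit_ge0 S d (hd : 0 <= d) t X : 0 <= hit w S d t X.
Proof.
elim: t X => [|t IH] X; rewrite ?hit_0 ?hit_S; case: ifP => // _.
rewrite mulr_ge0 ?invr_ge0 ?ler0n //.
by apply: sumr_ge0 => u _; apply: sumr_ge0 => v _; rewrite mulr_ge0 ?cp_ge0.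
Qed.

Lemma hit_le1 S d (hd : 0 <= d) t X : hit w S d t X <= 1.
Proof.
elim: t X => [|t IH] X; rewrite ?hit_0 ?hit_S; case: ifP => // _.
have H : \sum_(u : V) \sum_(v : V | 0 < w v u)
          copy_prob w S d X u v * hit w S d t (update X u v) <= #|V|%:R.
  apply: (@le_trans _ _ (\sum_(u : V) (1 : R))).
    apply: ler_sum => u _.
    apply: le_trans (cp_sum_le1 S d X u).
    apply: ler_sum => v _.
    by rewrite ler_piMr ?cp_ge0.
  by rewrite sumr_const.

have [n0|n0] := eqVneq (#|V|%:R : R) 0; first by rewrite n0 invr0 mul0r.
apply: (@le_trans _ _ ((#|V|%:R)^-1 * #|V|%:R)).
  by rewrite ler_wpM2l ?invr_ge0 ?ler0n.
by rewrite mulVf.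
Qed.

Lemma hit_mono S d (hd : 0 <= d) t X : hit w S d t X <= hit w S d t.+1 X.
Proof.
elim: t X => [|t IH] X.
  rewrite hit_0; case: ifP => hX; last exact: hit_ge0.
  by rewrite hit_S hX.
rewrite hit_S [X in _ <= X]hit_S; case: ifP => // _.
rewrite ler_wpM2l ?invr_ge0 ?ler0n //.
apply: ler_sum => u _; apply: ler_sum => v _.
by rewrite ler_wpM2l ?cp_ge0.
Qed.


Lemma couple (S1 S2 : {set V}) (hS : S1 \subset S2)
  (d1 d2 : R) (hd1 : 0 <= d1) (hd12 : d1 <= d2) t :
  forall X Y : {set V}, X \subset Y -> hit w S1 d1 t X <= hit w S2 d2 t Y.
Proof.
have hd2 : 0 <= d2 by lra.
elim: t => [|t IH] X Y XY.
  rewrite !hit_0; case: ifP => hX.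
    suff -> : Y == [set: V] by [].
    by rewrite finset.eqEsubset finset.subsetT -(eqP hX).
  by case: ifP => _ //; rewrite ler01.
case hX: (X == [set: V]).
  have -> : Y = [set: V].
    by apply/eqP; rewrite finset.eqEsubset finset.subsetT -(eqP hX).
  by rewrite !hit_S hX eqxx.
case hY: (Y == [set: V]).
  by rewrite [Q in _ <= Q]hit_S hY hit_le1.
rewrite !hit_S hX hY ler_wpM2l ?invr_ge0 ?ler0n //.
apply: ler_sum => u _; rewrite !sum_decomp.
apply: scalar_ineq.
- by case: ifP => _; lra.
- case: ifP => u1; case: ifP => u2 //; try lra.
  by move: u1 => /(fintype.subsetP hS); rewrite u2.
- by apply: sumr_ge0.
- rewrite [Q in _ <= Q](bigID (fun x => x \in X)) /=.
  rewrite -[Q in Q <= _]addr0 lerD //; last by apply: sumr_ge0.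
  rewrite le_eqVlt; apply/orP; left; apply/eqP; apply: eq_bigl => v.
  by case vX: (v \in X); rewrite ?andbT ?andbF // (fintype.subsetP XY v vX) andbT.
- rewrite [Q in _ <= Q](bigID (fun x => x \in Y)) /=.
  by rewrite -[Q in Q <= _]addr0 lerD //; apply: sumr_ge0.
- by apply: IH; rewrite finset.setUS.
- apply: IH; apply/fintype.subsetP => v /setD1P [_ vX].
  by rewrite in_setU1 (fintype.subsetP XY v vX) orbT.
- by apply: IH; rewrite finset.setSD.
Qed.

End Aux.

Theorem mainTheorem6 (R : realType) (V : finType) (w : V -> V -> R)
  (w_ge0 : forall v u : V, 0 <= w v u)
  (hconn : strongly_connected w)
  (S1 S2 : {set V}) (hS : S1 \subset S2)
  (delta1 delta2 : R) (hd1 : 0 <= delta1) (hd12 : delta1 <= delta2) :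
  fp w S1 delta1 <= fp w S2 delta2.
Proof.
rewrite /fp ler_wpM2l ?invr_ge0 ?ler0n //.
have hd2 : 0 <= delta2 by lra.
apply: ler_sum => u _; rewrite /fp_from.
have cv : forall S d, 0 <= d -> cvgn (fun t => hit w S d t [set u]).
  move=> S d hd; apply: nondecreasing_is_cvgn.
    by apply/nondecreasing_seqP => n; exact: hit_mono.
  by exists 1 => _ [n _ <-]; exact: hit_le1.
apply: ler_lim; [exact: cv | exact: cv |].
by apply: nearW => n; apply: couple.
Qed.
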